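(* Let $K$ be a field and let $p(s)=s^n+a_{n-1}s^{n-1}+\dots+a_0\in K[s]$ be a monic irreducible polynomial of degree $n$. Let $b(s)=(1,s,\dots,s^{n-1})^T\in K^n[s]$, let $C=C(p)$ be the companion matrix of $p$ and let $M=M(p)$ be the Hankel matrix defined in the context. Then \[ (sI-C)^{-1}=\pi_-\bigl(p^{-1}\,b\,b^TM\bigr), \] and for every integer $k\ge1$, \[ \bigl(sI-J(p^k)\bigr)^{-1}=\pi_-\Bigl(\bigl(pI_k-N_k\bigr)^{-1}\otimes b\,b^TM\Bigr). \]
   Context: For $f\in K(s)$ (rational functions over $K$) write uniquely $f=w+y$ with $w$ strictly proper (i.e. $w=0$ or $w=g/h$, $\deg g<\deg h$) and $y\in K[s]$; $\pi_-f=w$, applied entrywise to matrices. The companion matrix $C=C(p)$ is the $n\times n$ matrix with ones in positions $(i,i+1)$, $i=1,\dots,n-1$, last row $(-a_0,-a_1,\dots,-a_{n-1})$, and zeros elsewhere. $M=M(p)$ is the $n\times n$ matrix whose $(i,j)$ entry is $a_{i+j-1}$ if $i+j-1\le n-1$, $1$ if $i+j-1=n$, and $0$ if $i+j-1>n$ (first row $(a_1,\dots,a_{n-1},1)$, last row $(1,0,\dots,0)$). $N_k$ is the $k\times k$ matrix with ones on the superdiagonal and zeros elsewhere, and $I_k$ the $k\times k$ identity. $V=e_ne_1^T$ is the $n\times n$ matrix with a single $1$ in position $(n,1)$. The Jacobson block is $J(p^k)=I_k\otimes C+N_k\otimes V$ (an $nk\times nk$ matrix with $C$ in the diagonal blocks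 and $V$ in the blocks just above the diagonal), where $\otimes$ denotes the Kronecker product $A\otimes B=(a_{ij}B)$. *)

(* Defs.v *)
From HB Require Import structures.
From mathcomp Require Import all_boot all_order all_algebra.
From mathcomp Require Import generic_quotient fraction mxtens.
Set Implicit Arguments. Unset Strict Implicit. Unset Printing Implicit Defensive.
Import GRing.Theory.
Local Open Scope ring_scope.

Notation "x %:F" := (@FracField.tofrac _ x) : ring_scope.
Notation ratf K := {fraction {poly K}}.

Definition cst (K : fieldType) (a : K) : ratf K := (a%:P)%:F.

(* For f = g/h (any representative, h != 0),
   f = (g %% h)/h + (g %/ h), with (g %% h)/h strictly proper (or 0) and
   g %/ h polynomial; by uniqueness of this decomposition this is pi_- f. *)
Definition piminus (K : fieldType) (f : ratf K) : ratf K :=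
  let r := repr f in ((\n_r %% \d_r)%:F) / ((\d_r)%:F).

Definition companion (K : fieldType) (n : nat) (p : {poly K}) : 'M[K]_n :=
  \matrix_(i, j) (if i.+1 == n then - p`_j else ((j : nat) == i.+1)%:R).

(* Hankel matrix M(p) (0-based i,j; 1-based index i+j-1 becomes i+j+1). *)
Definition hankelM (K : fieldType) (n : nat) (p : {poly K}) : 'M[K]_n :=
  \matrix_(i, j) (if (i + j + 1 <= n.-1)%N then p`_(i + j + 1)
                  else if (i + j + 1 == n)%N then 1 else 0).

Definition nilN (R : pzRingType) (k : nat) : 'M[R]_k :=
  \matrix_(i, j) ((j : nat) == i.+1)%:R.

Definition Vmx (R : pzRingType) (n : nat) : 'M[R]_n :=
  \matrix_(i, j) (((i.+1 == n) && ((j : nat) == 0%N)))%:R.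

Definition jacobson (K : fieldType) (n : nat) (p : {poly K}) (k : nat)
  : 'M[K]_(k * n) :=
  (1%:M : 'M[K]_k) *t companion n p + nilN K k *t Vmx K n.

Definition bvec (K : fieldType) (n : nat) : 'cV[ratf K]_n :=
  \col_i (('X^i : {poly K})%:F).

(* Main.v *)
Require Import Defs.
From HB Require Import structures.
From mathcomp Require Import all_boot all_order all_algebra.
From mathcomp Require Import generic_quotient fraction mxtens ring zify.
Import GRing.Theory.
Local Open Scope ring_scope.
Lemma frac_repr (K : fieldType) (f : ratf K) :
  let r := repr f in \d_r != 0 /\ f = (\n_r)%:F / (\d_r)%:F.
Proof.
move=> r; split; first exact: denom_ratioP.
have dF : (\d_r)%:F != 0 by rewrite tofrac_eq0 denom_ratioP.
apply: (mulIf dF); rewrite divfK //.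
rewrite -[f in LHS]reprK -/r; unlock FracField.tofrac.
rewrite -[_ * _]FracField.pi_mul.
apply/eqmodP; rewrite /FracField.mulf /= FracField.equivfE.
rewrite !numden_Ratio ?oner_neq0 ?mulf_neq0 ?denom_ratioP ?oner_neq0 //.
by rewrite !mulr1 mulrC.
Qed.

Lemma piminus_spec (K : fieldType) (g h y : {poly K}) :
  h != 0 -> (size g < size h)%N ->
  piminus (g%:F / h%:F + y%:F) = g%:F / h%:F.
Proof.
move=> h0 sgh; rewrite /piminus.
have [d0 E] := frac_repr _ (g%:F / h%:F + y%:F).
move: (repr _) d0 E => r d0 E.
set nr := \n_r in E *; set dr := \d_r in d0 E *.
have hF : h%:F != 0 by rewrite tofrac_eq0.
have dF : dr%:F != 0 by rewrite tofrac_eq0.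
have E2 : nr * h = (g + y * h) * dr.
  apply/eqP; rewrite -tofrac_eq !tofracM tofracD tofracM.
  have key : nr%:F = (g%:F / h%:F + y%:F) * dr%:F by rewrite E (divfK dF).
  by apply/eqP; rewrite key mulrAC mulrDl (divfK hF).
have E3 : g * dr = (nr %% dr) * h.
  apply/eqP; rewrite -subr_eq0; apply/eqP.
  set D := _ - _.
  have dvd : dr * h %| D.
    have -> : D = (nr %/ dr - y) * (dr * h).
      rewrite {1}(divp_eq nr dr) in E2.
      have {}E2 : g * dr = (nr %/ dr * dr + nr %% dr) * h - y * h * dr.
        by rewrite E2; ring.
      by rewrite /D E2; ring.
    exact: dvdp_mull.
  have sD : (size D < size (dr * h)%R)%N.
    rewrite (size_mul d0 h0); apply: (leq_ltn_trans (size_polyD _ _)).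
    rewrite size_polyN gtn_max; apply/andP; split.
      apply: (leq_ltn_trans (size_polyMleq _ _)).
      have : (0 < size dr)%N by rewrite size_poly_gt0.
      move: sgh; move: (size g) (size h) (size dr); clear; lia.
    apply: (leq_ltn_trans (size_polyMleq _ _)).
    have := ltn_modpN0 nr d0.
    have : (0 < size h)%N by rewrite size_poly_gt0.
    move: (size (nr %% dr)) (size h) (size dr); clear; lia.
  apply/eqP/negPn/negP => D0.
  have := dvdp_leq D0 dvd.
  by rewrite leqNgt sD.
by rewrite -[g%:F](mulfK dF) -tofracM E3 tofracM mulrAC (mulfK hF).
Qed.

Section Part1.
Variable K : fieldType.
Variable n' : nat.
Local Notation N := n'.+1.
Variable p : {poly K}.
Hypothesis p_monic : p \is monic.
Hypothesis p_deg : size p = N.+1.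

Definition qq (j : nat) : {poly K} := \poly_(l < N) p`_(l + j.+1).
Definition Pm (i j : nat) : {poly K} := if (j < i)%N then 'X^(i - j.+1) else 0.
Definition gg (i j : nat) : {poly K} := 'X^i * qq j - p * Pm i j.

Lemma p_lead : p`_N = 1.
Proof. by move/monicP: p_monic; rewrite /lead_coef p_deg. Qed.

Lemma p_big m : (N < m)%N -> p`_m = 0.
Proof. by move=> h; rewrite nth_default // p_deg. Qed.

Lemma qS m : (p`_m)%:P + 'X * qq m = \poly_(l < N.+1) p`_(l + m).
Proof.
apply/polyP => l; rewrite coefD coefC coefXM !coef_poly.
case: l => [|l] /=; first by rewrite addr0.
rewrite add0r ltnS addSnnS.
by case: ltnP => // hl; case: ltnP => // hl2; exfalso; lia.
Qed.

Lemma qS0 : (p`_0)%:P + 'X * qq 0 = p.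
Proof.
rewrite qS; apply/polyP => l; rewrite coef_poly addn0.
by case: ltnP => // h; rewrite p_big.
Qed.

Lemma qSS j : (p`_j.+1)%:P + 'X * qq j.+1 = qq j.
Proof.
rewrite qS; apply/polyP => l; rewrite !coef_poly.
case: ltnP => h1; case: ltnP => h2 //; try (exfalso; lia).
by rewrite p_big //; lia.
Qed.

Lemma qq_last : qq n' = 1.
Proof.
apply/polyP => l; rewrite coef_poly coef1.
case: l => [|l] /=; first by rewrite p_lead.
by case: ltnP => // h; rewrite p_big //; lia.
Qed.

Lemma size_gg (i j : 'I_N) : (size (gg i j) < size p)%N.
Proof.
rewrite p_deg ltnS; apply/leq_sizeP => m hm.
have hi := ltn_ord i; have hj := ltn_ord j.
rewrite /gg /Pm; case: (ltnP j i) => hji.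
  rewrite coefB coefXnM coefMXn coef_poly.
  have -> : (m < i)%N = false by apply/negP => ?; lia.
  have -> : (m < i - j.+1)%N = false by apply/negP => ?; lia.
  have -> : (m - (i - j.+1) = m - i + j.+1)%N by lia.
  case: ltnP => h4; first by rewrite subrr.
  by rewrite p_big ?subrr //; lia.
rewrite mulr0 subr0 coefXnM coef_poly.
have -> : (m < i)%N = false by apply/negP => ?; lia.
case: ltnP => h4 //; first by rewrite p_big //; lia.
Qed.

Lemma comp_col (w : 'I_N -> {poly K}) (j : 'I_N) :
  \sum_l w l * ((companion N p) l j)%:P =
  (if (j : nat) is j'.+1 then w (inord j') else 0) - w ord_max * (p`_j)%:P.
Proof.
rewrite big_ord_recr /= [companion _ _ _ _]mxE eqxx polyCN mulrN; congr (_ - _).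
rewrite (eq_bigr (fun l : 'I_n' => w (widen_ord (leqnSn n') l) * ((j : nat) == l.+1)%:R%:P)); last first.
  move=> l _; rewrite mxE (_ : ((widen_ord (leqnSn n') l).+1 == N) = false) //.
  by rewrite eqSS; apply/negbTE; rewrite /= neq_ltn ltn_ord.
case: j => [[|j'] hj] /=.
  by rewrite big1 // => l _; rewrite polyC0 mulr0.
have hj' : (j' < n')%N by [].
rewrite (bigD1 (Ordinal hj')) //= eqxx polyC1 mulr1 big1 ?addr0.
  by congr w; apply: val_inj; rewrite /= inordK // ltnW.
move=> l hl; rewrite eqSS (_ : (j' == l) = false) ?polyC0 ?mulr0 //.
by apply/negbTE; move: hl; apply: contra => /eqP e; apply/eqP/val_inj.
Qed.

Definition Gp : 'M[{poly K}]_N := \matrix_(i, j) gg i j.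
Definition Ap : 'M[{poly K}]_N := 'X%:M - map_mx polyC (companion N p).

Lemma gg_last (i : 'I_N) : gg i n' = 'X^i.
Proof.
rewrite /gg qq_last mulr1 /Pm ltnNge (_ : (i <= n')%N) ?mulr0 ?subr0 //.
by rewrite -ltnS ltn_ord.
Qed.

Lemma GA : Gp *m Ap = p%:M.
Proof.
apply/matrixP => i j.
rewrite /Ap mulmxBr mul_mx_scalar !mxE.
rewrite (eq_bigr (fun l : 'I_N => gg i l * ((companion N p) l j)%:P)); last first.
  by move=> l _; rewrite !mxE.
rewrite (comp_col (fun l => gg i l)) /= gg_last.
case: j => [[|j'] hj] /=.
  rewrite sub0r opprK /gg /Pm.
  set a0 := p`_0; have E : p = a0%:P + 'X * qq 0 by rewrite qS0.
  case: i => [[|i'] hi] /=.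
    rewrite E; ring.
  rewrite mulr0n subSS subn0.
  rewrite E exprS; ring.
rewrite inordK; last by rewrite ltnW.
rewrite /gg -(qSS j') /Pm.
have -> : (i == Ordinal hj) = (i == j'.+1 :> nat) by [].
case: (ltngtP j'.+1 i) => hji.
- rewrite (_ : (i - j'.+1)%N = (i - j'.+2).+1); last by lia.
  rewrite exprS mulr0n; ring.
- rewrite mulr0n; ring.
- rewrite -hji subnn expr0 mulr1n; ring.
Qed.

Local Notation s := (('X : {poly K})%:F).
Local Notation pF := (p%:F).
Definition Amx : 'M[ratf K]_N := s *: 1%:M - map_mx (@cst K) (companion N p).
Definition Wmx : 'M[ratf K]_N := pF^-1 *: map_mx (@tofrac _) Gp.
Definition bbM : 'M[ratf K]_N :=
  bvec K N *m (bvec K N)^T *m map_mx (@cst K) (hankelM N p).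

Lemma pF_neq0 : pF != 0.
Proof. by rewrite tofrac_eq0 monic_neq0. Qed.

Lemma Amx_map : Amx = map_mx (@tofrac _) Ap.
Proof.
apply/matrixP => i j; rewrite !mxE rmorphB /= rmorphMn /cst /=.
by rewrite mulr_natr.
Qed.

Lemma WA : Wmx *m Amx = 1%:M.
Proof.
rewrite Amx_map /Wmx -scalemxAl -map_mxM GA map_scalar_mx /=.
by rewrite scale_scalar_mx mulVf // pF_neq0.
Qed.

Lemma invA : invmx Amx = Wmx.
Proof.
have AW := mulmx1C WA.
have uA := (mulmx1_unit WA).2.
by rewrite -[RHS]mul1mx -(mulVmx uA) -mulmxA AW mulmx1.
Qed.

Lemma hankelE (i j : nat) : (if (i + j + 1 <= N.-1)%N then p`_(i + j + 1)
     else if (i + j + 1)%N == N then 1 else 0) = p`_(i + j + 1).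
Proof.
case: ifP => // h1; case: ifP => [/eqP h2|h2].
  by rewrite h2 p_lead.
by rewrite p_big //; move/negbT: h1; move/negbT: h2; rewrite -ltnNge; lia.
Qed.

Lemma bbME (i j : 'I_N) : bbM i j = ('X^i * qq j)%:F.
Proof.
rewrite /qq poly_def mulr_sumr rmorph_sum !mxE; apply: eq_bigr => l _.
rewrite !mxE big_ord1 !mxE hankelE /cst -!tofracM; congr tofrac.
by rewrite -mul_polyC addn1 -addnS; ring.
Qed.

Lemma piminus_entry (i j : 'I_N) : piminus (pF^-1 * bbM i j) = Wmx i j.
Proof.
have E : 'X^i * qq j = gg i j + p * Pm i j by rewrite /gg subrK.
rewrite bbME E tofracD tofracM mulrDr mulKf ?pF_neq0 // mulrC.
rewrite piminus_spec ?monic_neq0 ?size_gg //.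
by rewrite /Wmx !mxE mulrC.
Qed.

Lemma part1 : invmx Amx = map_mx (@piminus K) (pF^-1 *: bbM).
Proof.
by rewrite invA; apply/matrixP => i j; rewrite [RHS]mxE [X in piminus X]mxE piminus_entry.
Qed.

Local Notation Vm := (Vmx (ratf K) N).

Lemma VX m (X : 'M[ratf K]_(N, m)) i j :
  (Vm *m X) i j = (i == ord_max)%:R * X ord0 j.
Proof.
rewrite mxE (bigD1 ord0) //= big1 ?addr0.
  by rewrite mxE eqxx andbT.
by move=> l hl; rewrite mxE (_ : (l : nat) == 0 = false) ?andbF ?mul0r //; apply/negbTE.
Qed.

Lemma bvec_col : bvec K N = pF *: col ord_max Wmx.
Proof.
apply/matrixP => i j; rewrite !mxE.
by rewrite gg_last (mulVKf pF_neq0).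
Qed.

Lemma Abvec : Amx *m bvec K N = pF *: delta_mx ord_max 0.
Proof.
by rewrite {1}bvec_col colE -scalemxAr mulmxA (mulmx1C WA) mul1mx.
Qed.

Lemma Vbvec : Vm *m bvec K N = delta_mx ord_max 0.
Proof.
apply/matrixP => i j; rewrite VX !mxE expr0 tofrac1 mulr1 [j]ord1 eqxx andbT.
by [].
Qed.

Lemma ABB : Amx *m bbM = pF *: (Vm *m bbM).
Proof.
by rewrite /bbM -!mulmxA !(mulmxA _ (bvec K N)) Abvec Vbvec -!scalemxAl.
Qed.

Lemma VW : Vm *m Wmx = pF^-1 *: (Vm *m bbM).
Proof.
apply/matrixP => i j; rewrite [RHS]mxE !VX bbME /Wmx /Gp !mxE /gg /Pm /=.
by rewrite mulr0 subr0 mulrCA.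
Qed.

Lemma NX k (j : nat) (a c : 'I_k) :
  (nilN (ratf K) k ^+ j) a c = ((c : nat) == (a + j)%N)%:R.
Proof.
elim: j a c => [|j IH] a c.
  by rewrite expr0 mxE addn0 eq_sym.
rewrite exprSr -mulmxE mxE.
case: (ltnP (a + j) k) => h.
  rewrite (bigD1 (Ordinal h)) //= IH eqxx mul1r big1 ?addr0.
    by rewrite mxE addnS.
  move=> l hl; rewrite IH (_ : (l : nat) == (a + j)%N = false) ?mul0r //.
  by apply/negbTE; move: hl; apply: contra => /eqP e; apply/eqP/val_inj.
rewrite big1.
  by rewrite (_ : (c : nat) == (a + j.+1)%N = false) //; apply/negbTE; have := ltn_ord c; lia.
move=> l _; rewrite IH (_ : (l : nat) == (a + j)%N = false) ?mul0r //.
by apply/negbTE; have := ltn_ord l; lia.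
Qed.

Lemma N_nil k : nilN (ratf K) k ^+ k = 0.
Proof.
apply/matrixP => a c; rewrite NX mxE.
by rewrite (_ : (c : nat) == (a + k)%N = false) //; apply/negbTE; have := ltn_ord c; lia.
Qed.

Lemma inv_of_right m (A B : 'M[ratf K]_m) : A *m B = 1%:M -> invmx A = B.
Proof.
move=> AB; have uA := (mulmx1_unit AB).1.
by rewrite -[LHS]mulmx1 -AB mulmxA (mulVmx uA) mul1mx.
Qed.

Lemma tele (V : zmodType) (f : nat -> V) k :
  \sum_(j < k) (f j - f j.+1) = f 0%N - f k.
Proof.
elim: k => [|k IH]; first by rewrite big_ord0 subrr.
by rewrite big_ord_recr /= IH addrA subrK.
Qed.

Lemma Rinv k : invmx (pF *: 1%:M - nilN (ratf K) k)
  = \sum_(j < k) pF^-(j.+1) *: nilN (ratf K) k ^+ j.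
Proof.
apply: inv_of_right.
set Nk := nilN _ k.
rewrite mulmxBl -scalemxAl mul1mx scaler_sumr mulmx_sumr.
have E : forall j, pF *: (pF ^- j.+1 *: Nk ^+ j) = pF ^- j *: Nk ^+ j.
  by move=> j; rewrite scalerA exprS invfM (mulVKf pF_neq0).
have E2 : forall j, Nk *m (pF ^- j.+1 *: Nk ^+ j) = pF ^- j.+1 *: Nk ^+ j.+1.
  by move=> j; rewrite -scalemxAr mulmxE -exprS.
under eq_bigr do rewrite E.
under [X in _ - X]eq_bigr do rewrite E2.
rewrite -sumrB.
rewrite (@tele _ (fun j => pF ^- j *: Nk ^+ j)) /= N_nil scaler0 subr0.
by rewrite expr0 invr1 scale1r expr0.
Qed.

Lemma cstD (x y : K) : cst (x + y) = cst x + cst y.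
Proof. by rewrite /cst polyCD tofracD. Qed.
Lemma cstM (x y : K) : cst (x * y) = cst x * cst y.
Proof. by rewrite /cst polyCM tofracM. Qed.
Lemma cst_nat m : cst (m%:R : K) = m%:R.
Proof. by rewrite /cst polyC_natr tofracMn tofrac1. Qed.

Lemma Lmat k : s *: 1%:M - map_mx (@cst K) (jacobson N p k)
  = 1%:M *t Amx - nilN (ratf K) k *t Vm.
Proof.
apply/matrixP => x y.
case: (mxtens_indexP x) => a b; case: (mxtens_indexP y) => c d.
rewrite /jacobson /Amx !mxE !mxtens_indexK /=.
rewrite (inj_eq (can_inj (@mxtens_indexK _ _))) xpair_eqE.
rewrite cstD !cstM !cst_nat.
set z := cst _.
rewrite -mulnb natrM; ring.
Qed.

Definition Gj (j : nat) : 'M[ratf K]_N :=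
  if j is j'.+1 then pF^-(j'.+2) *: bbM else Wmx.

Definition Tmx k : 'M[ratf K]_(k * N) :=
  \sum_(j < k) (nilN (ratf K) k ^+ j *t Gj j).

Lemma AG j : Amx *m Gj j.+1 = Vm *m Gj j.
Proof.
rewrite /= -scalemxAr ABB scalerA.
have -> : pF ^- j.+2 * pF = pF ^- j.+1.
  by rewrite [pF ^+ j.+2]exprS invfM mulrAC mulVf ?mul1r // pF_neq0.
case: j => [|j] /=; first by rewrite VW.
by rewrite -scalemxAr.
Qed.

Lemma one_tens m1 m2 : (1%:M : 'M[ratf K]_m1) *t (1%:M : 'M[ratf K]_m2) = 1%:M.
Proof.
apply/matrixP => x y.
case: (mxtens_indexP x) => a b; case: (mxtens_indexP y) => c d.
rewrite tensmxE !mxE (inj_eq (can_inj (@mxtens_indexK _ _))) xpair_eqE.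
by rewrite -mulnb natrM.
Qed.

Lemma LT k : (1%:M *t Amx - nilN (ratf K) k *t Vm) *m Tmx k = 1%:M.
Proof.
set Nk := nilN _ k.
pose u (j : nat) := Nk ^+ j *t (if j is j'.+1 then Vm *m Gj j' else 1%:M).
rewrite /Tmx mulmx_sumr.
rewrite (eq_bigr (fun j : 'I_k => u j - u j.+1)); last first.
  have NS : forall j, Nk *m Nk ^+ j = Nk ^+ j.+1 by move=> j; rewrite exprS mulmxE.
  move=> j _; rewrite mulmxBl !tensmx_mul mul1mx NS /u.
  case: (nat_of_ord j) => [|j'] /=; first by rewrite (mulmx1C WA).
  by rewrite AG.
rewrite (@tele _ u) /u N_nil tens0mx subr0 expr0.
exact: one_tens.
Qed.

Lemma invL k : invmx (s *: 1%:M - map_mx (@cst K) (jacobson N p k)) = Tmx k.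
Proof. by apply: inv_of_right; rewrite Lmat LT. Qed.

Lemma sum_delta k (a c : 'I_k) (F : nat -> ratf K) :
  \sum_(j < k) ((c : nat) == (a + j)%N)%:R * F j
  = if (a <= c)%N then F (c - a)%N else 0.
Proof.
case: leqP => h.
  have hk : (c - a < k)%N by have := ltn_ord c; lia.
  rewrite (bigD1 (Ordinal hk)) //= subnKC // eqxx mul1r big1 ?addr0 //.
  move=> l hl; rewrite (_ : (c : nat) == (a + l)%N = false) ?mul0r //.
  apply/negbTE; move: hl; apply: contra => /eqP e; apply/eqP/val_inj => /=.
  by rewrite e addKn.
rewrite big1 // => l _; rewrite (_ : (c : nat) == (a + l)%N = false) ?mul0r //.
by apply/negbTE; lia.
Qed.

Lemma T_entry k a b c d :
  Tmx k (mxtens_index (a, b)) (mxtens_index (c, d))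
  = if (a <= c)%N then Gj (c - a) b d else 0.
Proof.
rewrite /Tmx summxE.
rewrite (eq_bigr (fun j : 'I_k => ((c : nat) == (a + j)%N)%:R * Gj j b d)).
  by rewrite (@sum_delta k a c (fun j => Gj j b d)).
by move=> j _; rewrite tensmxE NX.
Qed.

Lemma R_entry k a b c d :
  (invmx (pF *: 1%:M - nilN (ratf K) k) *t bbM)
     (mxtens_index (a, b)) (mxtens_index (c, d))
  = if (a <= c)%N then pF ^- (c - a).+1 * bbM b d else 0.
Proof.
rewrite tensmxE Rinv summxE.
rewrite (eq_bigr (fun j : 'I_k => ((c : nat) == (a + j)%N)%:R * pF ^- j.+1)).
  by rewrite (@sum_delta k a c (fun j => pF ^- j.+1)); case: ifP => //; rewrite mul0r.
by move=> j _; rewrite mxE NX mulrC.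
Qed.

Lemma size_pow_big (b d : 'I_N) m :
  (size ('X^b * qq d)%R < size (p ^+ m.+2)%R)%N.
Proof.
have pe : p ^+ m.+2 != 0 by rewrite expf_neq0 // monic_neq0.
have := size_exp p m.+2; rewrite p_deg /= => e.
rewrite -(prednK (_ : 0 < size (p ^+ m.+2))%N) ?size_poly_gt0 // e.
apply: (leq_ltn_trans (size_polyMleq _ _)).
rewrite size_polyXn.
have := size_poly N (fun l => p`_(l + d.+1)); rewrite -/(qq d) => hq.
have hb := ltn_ord b.
move: hq hb; move: (size (qq d)) => sq; clear; nia.
Qed.

Lemma piminus0 : piminus (0 : ratf K) = 0.
Proof.
have h : (size (0%R : {poly K}) < size (1%R : {poly K}))%N by rewrite size_poly0 size_poly1.
have := @piminus_spec K 0 1 0 (oner_neq0 _) h.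
by rewrite !tofrac0 mul0r addr0.
Qed.

Lemma part2 k : invmx (s *: 1%:M - map_mx (@cst K) (jacobson N p k))
  = map_mx (@piminus K) (invmx (pF *: 1%:M - nilN (ratf K) k) *t bbM).
Proof.
rewrite invL; apply/matrixP => x y.
case: (mxtens_indexP x) => a b; case: (mxtens_indexP y) => c d.
rewrite [RHS]mxE T_entry R_entry.
case: ifP => _; last by rewrite piminus0.
case: (c - a)%N => [|m] /=.
  by rewrite piminus_entry.
rewrite mxE bbME -tofracXn.
have h := @piminus_spec K ('X^b * qq d) (p ^+ m.+2) 0.
rewrite tofrac0 addr0 in h.
rewrite [_^-1 * _]mulrC h //; first by rewrite expf_neq0 // monic_neq0.
exact: size_pow_big.
Qed.
End Part1.

Theorem lemma4p2 (K : fieldType) (n : nat) (p : {poly K})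
  (p_monic : p \is monic) (p_irr : irreducible_poly p)
  (p_deg : size p = n.+1) :
  let s : ratf K := ('X : {poly K})%:F in
  let pF : ratf K := p%:F in
  let bbM : 'M[ratf K]_n :=
    bvec K n *m (bvec K n)^T *m map_mx (@cst K) (hankelM n p) in
  invmx (s *: 1%:M - map_mx (@cst K) (companion n p))
    = map_mx (@piminus K) (pF^-1 *: bbM)
  /\
  (forall k : nat, (1 <= k)%N ->
     invmx (s *: 1%:M - map_mx (@cst K) (jacobson n p k))
       = map_mx (@piminus K)
           (invmx (pF *: 1%:M - nilN (ratf K) k) *t bbM)).
Proof.
case: n p_deg => [|n'] p_deg.
  by case: p_irr; rewrite p_deg.
move=> s pF bbM; split.
  exact: (@part1 K n' p p_monic p_deg).
by move=> k _; exact: (@part2 K n' p p_monic p_deg k).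
Qed.
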